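(* Let $D\ge 2$ be an integer and $n\ge 1$. Let $\mathcal{C}\subseteq(\mathbb{C}^D)^{\otimes n}$ be an $n$-qudit stabilizer code of dimension $K\ge 1$, with stabilizer $\mathcal{S}\subseteq\mathcal{P}_n$. Then $$K\cdot|\mathcal{S}| = D^n,$$ where $|\mathcal{S}|$ is the order of the group $\mathcal{S}$. In particular, $K$ is a divisor of $D^n$ (not necessarily a power of $D$ when $D$ is composite).
   Context: Fix an integer $D\ge2$, let $\omega=e^{2\pi i/D}$, and let all integer arithmetic be modulo $D$. On $\mathbb{C}^D$ with basis $\{|j\rangle\}_{j=0}^{D-1}$ define $Z=\sum_{j}\omega^j|j\rangle\langle j|$ and $X=\sum_j |j\rangle\langle j+1|$ (indices mod $D$), so $X^D=Z^D=I$ and $XZ=\omega ZX$. For $n$ qudits, a Pauli product is an operator $\omega^{\lambda}X_1^{x_1}Z_1^{z_1}\otimes\cdots\otimes X_n^{x_n}Z_n^{z_n}$ with $\lambda\in\mathbb{Z}_D$ and $\mathbf{x},\mathbf{z}\in\mathbb{Z}_D^n$; these form a group $\mathcal{P}_n$ (the generalized Pauli group) under multiplication. A stabilizer code is a subspace $\mathcal{C}$ of $(\mathbb{C}^D)^{\otimes n}$ of dimension $K\ge1$ such that: (C1) there is a subgroup $\mathcal{S}\le\mathcal{P}_n$ with $s|\psi\rangle=|\psi\rangle$ for all $s\in\mathcal{S}$ and all $|\psi\rangle\in\mathcal{C}$; (C2) $\mathcal{S}$ is maximal: every $s\in\mathcal{P}_n$ fixing every vector of $\mathcal{C}$ lies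 in $\mathcal{S}$; (C3) $\mathcal{C}$ is maximal: every vector fixed by all $s\in\mathcal{S}$ lies in $\mathcal{C}$. Then $\mathcal{S}$ is called the stabilizer of $\mathcal{C}$ (it is necessarily abelian). *)

(* Defs.v *)
From HB Require Import structures.
From mathcomp Require Import all_boot all_order all_algebra all_field.
Set Implicit Arguments. Unset Strict Implicit. Unset Printing Implicit Defensive.
Import Order.TTheory GRing.Theory Num.Theory.
Local Open Scope ring_scope.

(* omega = e^{2 pi i / D}: D.-root (-1) is the D-th root of -1 with minimal
   nonnegative argument, i.e. e^{i pi / D}; its square is e^{2 pi i / D}. *)
Definition omega (D : nat) : algC := (D.-root (-1)) ^+ 2.

(* computational basis labels |j_1 ... j_n>, j_i in Z_D (D >= 2 assumed) *)
Definition qbasis (D n : nat) := {ffun 'I_n -> 'Z_D}.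

(* states in (C^D)^{tensor n}: coefficient functions on the basis *)
Definition qstate (D n : nat) := {ffun qbasis D n -> algC^o}.

(* a Pauli product omega^lambda X^{x_1} Z^{z_1} (x) ... (x) X^{x_n} Z^{z_n},
   encoded by (lambda, (x, z)) *)
Definition pauli (D n : nat) :=
  ('Z_D * ({ffun 'I_n -> 'Z_D} * {ffun 'I_n -> 'Z_D}))%type.

(* Action: X|j> = |j-1>, Z|j> = omega^j |j>, so
   X^x Z^z |j> = omega^{z j} |j - x>, and the coefficient of |k> in
   (omega^lambda X^x Z^z) psi is omega^lambda * prod_i omega^{z_i (k_i + x_i)} * psi(k + x). *)
Definition pauli_op (D n : nat) (s : pauli D n) (v : qstate D n) : qstate D n :=
  [ffun k : qbasis D n =>
     omega D ^+ (val s.1)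
     * (\prod_(i < n) omega D ^+ (val (s.2.2 i * (k i + s.2.1 i))))
     * v [ffun i => k i + s.2.1 i]].

Definition pauli_id (D n : nat) : pauli D n := (0, ([ffun => 0], [ffun => 0])).

Definition is_stabilizer_code (D n : nat) (C : {vspace qstate D n})
    (S : {set pauli D n}) : Prop :=
  pauli_id D n \in S /\
      (forall s t, s \in S -> t \in S ->
         exists2 u, u \in S & forall v, pauli_op u v = pauli_op s (pauli_op t v)) /\
      (forall s, s \in S ->
         exists2 u, u \in S & forall v, pauli_op u (pauli_op s v) = v) /\
      (forall s v, s \in S -> v \in C -> pauli_op s v = v) /\
      (forall s, (forall v, v \in C -> pauli_op s v = v) -> s \in S) /\
      (forall v, (forall s, s \in S -> pauli_op s v = v) -> v \in C).

(* Main.v *)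
Require Import Defs.
From HB Require Import structures.
From mathcomp Require Import all_boot all_order all_algebra all_field.
From Stdlib Require Import IndefiniteDescription.
Set Implicit Arguments. Unset Strict Implicit. Unset Printing Implicit Defensive.
Import Order.TTheory GRing.Theory Num.Theory.
Local Open Scope ring_scope.

Lemma unit_norm1 (u : algC) n : (0 < n)%N -> u ^+ n = 1 \/ u ^+ n = -1 -> `|u| = 1.
Proof.
move=> n0 h; apply/eqP; rewrite -(pexpr_eq1 n0) ?normr_ge0 // -normrX.
by case: h => ->; rewrite ?normrN normr1.
Qed.

Lemma normB1_sq (u : algC) : `|u| = 1 -> `|u - 1| ^+ 2 = 2 - 2 * 'Re u.
Proof.
move=> hu; rewrite normCK rmorphB rmorph1 ReE.
have h : u * u^* = 1 by rewrite -normCK hu expr1n.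
have -> : 2 * ((u + u^*) / 2%:R) = u + u^*.
  by rewrite mulrC -mulrA mulVf ?mulr1 // pnatr_eq0.
rewrite mulrBl !mulrBr h mul1r mulr1.
rewrite opprB addrA opprD !addrA; congr (_ - _).
by rewrite mulr1 addrAC.
Qed.

Lemma norm1X (u : algC) n : (0 < n)%N -> `|u ^+ n| = 1 -> `|u| = 1.
Proof.
move=> n0 h; apply/eqP; rewrite -(pexpr_eq1 n0) ?normr_ge0 // -normrX h //.
Qed.

Lemma geo0 (x : algC) g : x ^+ g = 1 -> x != 1 -> \sum_(k < g) x ^+ k = 0.
Proof.
move=> h1 h2; have := subrX1 x g; rewrite h1 subrr => /esym/eqP.
by rewrite mulf_eq0 subr_eq0 (negbTE h2) /= => /eqP.
Qed.

Lemma Lroot (g : nat) (w : algC) : (1 < g)%N -> `|w| = 1 -> w != 1 ->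
  exists y, y ^+ g = w /\ 'Re w < 'Re y.
Proof.
move=> g1 nw w1; have g0 : (0 < g)%N by apply: ltnW.
pose y0 := g.-root w; have hy0 : y0 ^+ g = w := rootCK g0 w.
have [zeta pz] := C_prim_root_exists g0.
pose yk k := y0 * zeta ^+ k.
pose q (y : algC) := \sum_(j < g) y ^+ j.
have hyk k : yk k ^+ g = w by rewrite /yk exprMn hy0 exprAC (prim_expr_order pz) expr1n mulr1.
have sumq : \sum_(k < g) q (yk k) = g%:R.
  rewrite /q exchange_big /= (bigD1 (Ordinal g0)) //= [X in _ + X]big1 => [|j hj].
    by rewrite addr0; under eq_bigr => k _ do rewrite expr0; rewrite sumr_const card_ord.
  under eq_bigr => k _ do rewrite /yk exprMn -exprM mulnC exprM.
  rewrite -mulr_sumr geo0 ?mulr0 //; first by rewrite exprAC (prim_expr_order pz) expr1n.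
  rewrite -(prim_order_dvd pz); apply/negP => /(dvdn_leq _) H.
  have jg := ltn_ord j; have j0 : (0 < j)%N.
    by rewrite lt0n; apply: contra hj => /eqP j0; apply/eqP/val_inj.
  by move: (H j0); rewrite leqNgt jg.
have : [exists k : 'I_g, 1 < `|q (yk k)|].
  apply: contraT => /existsPn H.
  have hle (k : 'I_g) : `|q (yk k)| <= 1.
    by rewrite real_leNgt ?normr_real ?rpred1 // H.
  have hRe (k : 'I_g) : 'Re (q (yk k)) <= `|q (yk k)| by case: (leif_Re_Creal (q (yk k))).
  have hsum : \sum_(k < g) (1 - 'Re (q (yk k))) = 0.
    by rewrite sumrB -raddf_sum sumq sumr_const card_ord /= (Creal_ReP _ _) ?rpred_nat // subrr.
  have hq (k : 'I_g) : q (yk k) = 1.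
    have ge0 (i : 'I_g) : 0 <= 1 - 'Re (q (yk i)).
      by rewrite subr_ge0; apply: le_trans (hRe i) (hle i).
    have := psumr_eq0P (fun i _ => ge0 i) hsum (i := k) isT.
    move=> /eqP; rewrite subr_eq0 => /eqP h1.
    have hn : 'Re (q (yk k)) = `|q (yk k)|.
      by apply/le_anti; rewrite hRe /= -h1 hle.
    have := leif_Re_Creal (q (yk k)); case=> _; rewrite hn eqxx => /esym hp.
    by rewrite -(ger0_norm hp) -hn -h1.
  have hw (k : 'I_g) : yk k = w.
    have := subrX1 (yk k) g; rewrite hyk -/(q (yk k)) hq mulr1 => /eqP.
    by rewrite (can_eq (addrK _)) => /eqP.
  have := hw (Ordinal g1); rewrite -(hw (Ordinal g0)) /yk /= expr0 mulr1 expr1.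
  have y00 : y0 != 0.
    apply/eqP => h0; move: nw; rewrite -hy0 h0 expr0n gtn_eqF // normr0 => /eqP.
    by rewrite eq_sym oner_eq0.
  rewrite -{2}[y0]mulr1 => /(mulfI y00) /eqP.
  by rewrite -[zeta]expr1 -(prim_order_dvd pz) dvdn1 gtn_eqF.
move=> /existsP [k hk].
set y := yk k.
have ny : `|y| = 1 by apply: (norm1X g0); rewrite hyk.
have hwy : w - 1 = (y - 1) * q y by rewrite -(hyk k) subrX1.
have y1 : y != 1 by apply: contraNneq w1 => e; rewrite -(hyk k) -/y e expr1n.
have ineq : `|y - 1| ^+ 2 < `|w - 1| ^+ 2.
  rewrite hwy normrM exprMn ltr_pMr ?exprn_egt1 //.
  by rewrite exprn_gt0 // normr_gt0 subr_eq0.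
rewrite (normB1_sq ny) (normB1_sq nw) ltrD2l ltrN2 ltr_pM2l // in ineq.
by exists y; split; [exact: hyk|].
Qed.

Lemma N1_neq1 : (-1 : algC) != 1.
Proof.
apply/eqP => h; have : (2%:R : algC) == 0 by rewrite mulr2n -{1}h addNr.
by rewrite pnatr_eq0.
Qed.

Lemma omega_prim (D : nat) : (1 < D)%N -> D.-primitive_root ((D.-root (-1 : algC)) ^+ 2).
Proof.
move=> D1; have D0 : (0 < D)%N by apply: ltnW.
set z := D.-root (-1 : algC); have hz : z ^+ D = -1 := rootCK D0 (-1).
have hw : (z ^+ 2) ^+ D = 1 by rewrite exprAC hz sqrrN expr1n.
have [m pm mD] := prim_order_exists D0 hw.
have m0 : (0 < m)%N := prim_order_gt0 pm.
case: (eqVneq m D) => [<- // | mneD].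
exfalso.
have hm : z ^+ (2 * m) = 1 by rewrite exprM (prim_expr_order pm).
set q := (D %/ m)%N.
have Dq : D = (m * q)%N by rewrite /q mulnC divnK.
have q1 : (1 < q)%N.
  rewrite ltnNge; apply/negP => hq; move: mneD; rewrite Dq.
  have q0 : (0 < q)%N by rewrite /q divn_gt0 // dvdn_leq.
  have -> : q = 1%N by apply/eqP; rewrite eqn_leq hq q0.
  by rewrite muln1 eqxx.
have hzm : z ^+ m = -1.
  move: hz; rewrite Dq -(odd_double_half q) mulnDr exprD.
  have -> : (m * (q./2).*2 = (2 * m) * q./2)%N.
    by rewrite -muln2 mulnCA mulnC [(m * 2)%N]mulnC.
  rewrite [z ^+ (2 * m * _)]exprM hm expr1n mulr1.
  case: (odd q); rewrite ?muln1 // muln0 expr0 => /eqP.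
  by rewrite eq_sym (negbTE N1_neq1).
have nz : `|z| = 1 by apply: (norm1X D0); rewrite hz normrN normr1.
have z1 : z != 1.
  by apply: contra_neq N1_neq1 => e; rewrite -hz e expr1n.
have [y [hyq hRe]] := Lroot q1 nz z1.
have hyD : y ^+ D = -1 by rewrite Dq mulnC exprM hyq hzm.
have key (u : algC) : u ^+ D = -1 -> 0 <= 'Im u -> 'Re u <= 'Re z.
  by move=> h1 h2; apply: rootC_Re_max.
case: (boolP (0 <= 'Im y)) => hIm.
  by have := key y hyD hIm; rewrite real_leNgt ?Creal_Re // hRe.
have := key (y^*)%C; rewrite -rmorphXn hyD rmorphN rmorph1 Re_conj Im_conj.
move=> /(_ erefl); rewrite oppr_ge0 [_ <= 'Re z]real_leNgt ?Creal_Re // hRe => H; suff /H : 'Im y <= 0 by [].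
by move: hIm; rewrite -real_ltNge ?Creal_Im ?rpred0 // => /ltW.
Qed.

Lemma om_D D : (1 < D)%N -> omega D ^+ D = 1.
Proof. by move=> hD; apply: prim_expr_order; apply: omega_prim. Qed.

Lemma valZ_lt D (hD : (1 < D)%N) (x : 'Z_D) : (val x < D)%N.
Proof. by case: x => m hm /=; move: hm; rewrite Zp_cast. Qed.

Lemma om_add D (hD : (1 < D)%N) (x y : 'Z_D) :
  omega D ^+ val (x + y) = omega D ^+ val x * omega D ^+ val y.
Proof.
rewrite -exprD -[in RHS](expr_mod _ (om_D hD)); congr (_ ^+ _).
by rewrite /=; move: (nat_of_ord x) (nat_of_ord y) => a b; rewrite Zp_cast.
Qed.

Lemma om_neq0 D (hD : (1 < D)%N) : omega D != 0.
Proof.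
apply/eqP => h; have := om_D hD; rewrite h expr0n gtn_eqF ?(ltnW hD) //.
by move/eqP; rewrite eq_sym oner_eq0.
Qed.

Lemma om_eq1 D (hD : (1 < D)%N) (x : 'Z_D) : omega D ^+ val x = 1 -> x = 0.
Proof.
move=> h; have : (D %| val x)%N by rewrite (prim_order_dvd (omega_prim hD)) h.
by rewrite /dvdn modn_small ?valZ_lt // => /eqP h0; apply/val_inj.
Qed.

Lemma om_inj D (hD : (1 < D)%N) (x y : 'Z_D) :
  omega D ^+ val x = omega D ^+ val y -> x = y.
Proof.
move=> h; apply/eqP; rewrite -subr_eq0; apply/eqP/(om_eq1 hD).
have : omega D ^+ val (x - y) * omega D ^+ val y = 1 * omega D ^+ val y.
  by rewrite -om_add // subrK h mul1r.
by move/(mulIf (expf_neq0 _ (om_neq0 hD))).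
Qed.

Definition ek D n (k : qbasis D n) : qstate D n := [ffun j => (j == k)%:R].
Definition trq D n (f : qstate D n -> qstate D n) : algC :=
  \sum_(k : qbasis D n) f (ek k) k.
Definition cf D n (s : pauli D n) (k : qbasis D n) : algC :=
  omega D ^+ val s.1 * \prod_(i < n) omega D ^+ val (s.2.2 i * (k i + s.2.1 i)).
Definition sh D n (k x : qbasis D n) : qbasis D n := [ffun i => k i + x i].

Lemma op_E D n (s : pauli D n) v k : pauli_op s v k = cf s k * v (sh k s.2.1).
Proof. by rewrite ffunE. Qed.

Lemma opD D n (s : pauli D n) v w : pauli_op s (v + w) = pauli_op s v + pauli_op s w.
Proof. by apply/ffunP => k; rewrite !ffunE mulrDr. Qed.

Lemma opZ D n (s : pauli D n) a v : pauli_op s (a *: v) = a *: pauli_op s v.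
Proof. by apply/ffunP => k; rewrite !ffunE /= mulrCA. Qed.

Lemma op0 D n (s : pauli D n) : pauli_op s 0 = 0.
Proof. by apply/ffunP => k; rewrite !ffunE mulr0. Qed.

Lemma op_sum D n (s : pauli D n) (I : Type) (r : seq I) (P : pred I) F :
  pauli_op s (\sum_(i <- r | P i) F i) = \sum_(i <- r | P i) pauli_op s (F i).
Proof. exact: (big_morph _ (opD s) (op0 s)). Qed.

Lemma cf_neq0 D n (hD : (1 < D)%N) (s : pauli D n) k : cf s k != 0.
Proof.
rewrite /cf mulf_neq0 //; first exact: expf_neq0 (om_neq0 hD).
by rewrite prodf_seq_neq0; apply/allP => i _; exact: expf_neq0 (om_neq0 hD).
Qed.

Lemma op_ek D n (s : pauli D n) j k :
  pauli_op s (ek j) k = cf s k * (sh k s.2.1 == j)%:R.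
Proof. by rewrite op_E ffunE. Qed.

Lemma prod_delta D n (hD : (1 < D)%N) (z : {ffun 'I_n -> 'Z_D}) (i0 : 'I_n) :
  \prod_(i < n) omega D ^+ val (z i * (if i == i0 then 1 else 0)) = omega D ^+ val (z i0).
Proof.
rewrite (bigD1 i0) // eqxx mulr1 big1 => [|i /negbTE ->]; first exact: mulr1.
by rewrite mulr0 expr0.
Qed.

Lemma prod_zero D n (z : {ffun 'I_n -> 'Z_D}) :
  \prod_(i < n) omega D ^+ val (z i * 0) = 1.
Proof. by rewrite big1 // => i _; rewrite mulr0 expr0. Qed.

Lemma cf_shift D n (s : pauli D n) (d : qbasis D n) :
  cf s (- s.2.1 + d) = omega D ^+ val s.1 * \prod_(i < n) omega D ^+ val (s.2.2 i * d i).
Proof.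
rewrite /cf; congr (_ * _); apply: eq_bigr => i _.
by rewrite !ffunE addrAC addNr add0r.
Qed.

Lemma op_inj D n (hD : (1 < D)%N) (a b : pauli D n) :
  (forall v, pauli_op a v = pauli_op b v) -> a = b.
Proof.
move=> h.
have E j k : cf a k * (sh k a.2.1 == j)%:R = cf b k * (sh k b.2.1 == j)%:R.
  by rewrite -!op_ek h.
have shk0 x : sh 0 x = x by apply/ffunP => i; rewrite !ffunE add0r.
have ex : a.2.1 = b.2.1.
  have := E (sh 0 a.2.1) 0; rewrite eqxx mulr1.
  case: (eqVneq (sh 0 b.2.1) (sh 0 a.2.1)) => [e|ne]; first by rewrite !shk0 in e.
  by rewrite mulr0 => /eqP; rewrite (negbTE (cf_neq0 hD a 0)).
have ecf k : cf a k = cf b k.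
  by have := E (sh k a.2.1) k; rewrite ex !eqxx !mulr1.
have el : a.1 = b.1.
  have := ecf (- a.2.1 + 0); rewrite [in RHS]ex !cf_shift.
  under eq_bigr => i _ do rewrite ffunE.
  under [in RHS]eq_bigr => i _ do rewrite ffunE.
  by rewrite !prod_zero !mulr1 => /(om_inj hD).
have ez : a.2.2 = b.2.2.
  apply/ffunP => i0.
  have := ecf (- a.2.1 + [ffun i => if i == i0 then 1 else 0]).
  rewrite [in RHS]ex !cf_shift.
  under eq_bigr => i _ do rewrite ffunE.
  under [in RHS]eq_bigr => i _ do rewrite ffunE.
  rewrite !prod_delta // el => /(mulfI (expf_neq0 _ (om_neq0 hD))).
  exact: om_inj.
by case: a b ex el ez {h E ecf} => la [xa za] [lb [xb zb]] /= -> -> ->.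
Qed.

Lemma tr_op D n (hD : (1 < D)%N) (s : pauli D n) :
  trq (pauli_op s) = if (s.2.1 == 0) && (s.2.2 == 0)
                     then omega D ^+ val s.1 * #|qbasis D n|%:R else 0.
Proof.
rewrite /trq; under eq_bigr => k _ do rewrite op_ek.
case: (eqVneq s.2.1 0) => hx /=; last first.
  rewrite big1 // => k _; have /negbTE -> : sh k s.2.1 != k; last by rewrite mulr0.
  apply: contra hx => /eqP e; apply/eqP/ffunP => i.
  have := congr1 (fun f : qbasis D n => f i) e; rewrite /= !ffunE => /eqP.
  by rewrite -{2}[k i]addr0 => /eqP /addrI.
have shk k : sh k s.2.1 = k by apply/ffunP => i; rewrite ffunE hx ffunE addr0.
under eq_bigr => k _ do rewrite shk eqxx mulr1.
case: (eqVneq s.2.2 0) => hz.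
  have hc k : cf s k = omega D ^+ val s.1.
    by rewrite /cf hz big1 ?mulr1 // => i _; rewrite ffunE mul0r expr0.
  by under eq_bigr => k _ do rewrite hc; rewrite sumr_const mulr_natr.
have [i0 hi0] : exists i0, s.2.2 i0 != 0.
  apply/existsP; apply: contraNT hz => /existsPn H; apply/eqP/ffunP => i.
  by rewrite ffunE; apply/eqP; rewrite -[_ == _]negbK H.
set d : qbasis D n := [ffun i => if i == i0 then 1 else 0].
set T := \sum_k cf s k.
have hT : T = T * omega D ^+ val (s.2.2 i0).
  rewrite {1}/T (reindex_inj (addIr d)) /= mulr_suml; apply: eq_bigr => k _.
  rewrite /cf -mulrA; congr (_ * _).
  rewrite -(prod_delta hD) -big_split; apply: eq_bigr => i _.
  have ei : omega D ^+ val (s.2.2 i * ((k + d) i + s.2.1 i)) =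
    omega D ^+ val (s.2.2 i * (k i + s.2.1 i)) *
    omega D ^+ val (s.2.2 i * (if i == i0 then 1 else 0)).
    by rewrite -om_add // !ffunE addrAC mulrDr.
  exact: ei.
move/eqP: hT; rewrite -subr_eq0 -{1}[T]mulr1 -mulrBr mulf_eq0 => /orP[/eqP //|].
rewrite subr_eq0 eq_sym => /eqP /(om_eq1 hD) h0.
by rewrite h0 eqxx in hi0.
Qed.

Lemma vdec D n (v : qstate D n) : v = \sum_k v k *: ek k.
Proof.
apply/ffunP => j; rewrite sum_ffunE (bigD1 j) //= big1 => [|k hk].
  by rewrite !ffunE eqxx addr0 /=; symmetry; exact: mulr1.
by rewrite !ffunE eq_sym (negbTE hk) /=; exact: mulr0.
Qed.

Lemma tr_proj D n (C : {vspace qstate D n}) (f : qstate D n -> qstate D n) (c : algC) :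
  (forall v w, f (v + w) = f v + f w) -> (forall a v, f (a *: v) = a *: f v) ->
  (forall v, f v \in C) -> (forall v, v \in C -> f v = c *: v) ->
  trq f = c * (\dim C)%:R.
Proof.
move=> fD fZ fC fid.
have f0 : f 0 = 0 by apply: (addrI (f 0)); rewrite -fD !addr0.
have fsum (I : Type) (r : seq I) (P : pred I) F :
  f (\sum_(i <- r | P i) F i) = \sum_(i <- r | P i) f (F i).
  exact: (big_morph _ fD f0).
set X := vbasis C.
have freeX : free X := basis_free (vbasisP C).
pose a (j : 'I_(\dim C)) k := coord X j (f (ek k)).
have fe k : f (ek k) = \sum_j a j k *: X`_j := coord_vbasis (fC (ek k)).
have hj (j : 'I_(\dim C)) : \sum_k a j k * X`_j k = c.
  have XjC : X`_j \in C by apply: vbasis_mem; apply: mem_nth; rewrite size_tuple.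
  have := fid _ XjC; rewrite {1}(vdec X`_j) fsum.
  under eq_bigr => k _ do rewrite fZ fe.
  move/(congr1 (coord X j)); rewrite linearZ /= coord_free // eqxx mulr1 => <-.
  rewrite linear_sum /=; apply: eq_bigr => k _.
  by rewrite linearZ /= coord_sum_free // mulrC.
rewrite /trq; under eq_bigr => k _ do rewrite fe sum_ffunE.
under eq_bigr => k _ do under eq_bigr => j _ do rewrite ffunE /=.
rewrite exchange_big /=.
under eq_bigr => j _ do rewrite hj.
by rewrite sumr_const card_ord mulr_natr.
Qed.


Lemma card_qbasis D n (hD : (1 < D)%N) : #|qbasis D n| = (D ^ n)%N.
Proof. by rewrite card_ffun !card_ord Zp_cast. Qed.

Theorem theorem1 (D n : nat) (hD : (1 < D)%N) (hn : (0 < n)%N)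
    (C : {vspace qstate D n}) (S : {set pauli D n}) (K : nat)
    (hK : \dim C = K) (hK1 : (0 < K)%N)
    (hcode : is_stabilizer_code C S) :
  (K * #|S| = D ^ n)%N /\ (K %| D ^ n)%N.
Proof.
case: hcode => hid [hmul [hinv [hC1 [hC2 hC3]]]].
pose P (v : qstate D n) := \sum_(s in S) pauli_op s v.
have PD v w : P (v + w) = P v + P w.
  by rewrite /P -big_split; apply: eq_bigr => s _; exact: opD.
have PZ a v : P (a *: v) = a *: P v.
  by rewrite /P scaler_sumr; apply: eq_bigr => s _; exact: opZ.
have Pid v : v \in C -> P v = (#|S|%:R) *: v.
  move=> hv; rewrite /P; under eq_bigr => s hs do rewrite hC1 //.
  by rewrite sumr_const scaler_nat.
have PC v : P v \in C.
  apply: hC3 => t ht; rewrite /P op_sum.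
  have hu s : {u | s \in S -> u \in S /\ forall v, pauli_op u v = pauli_op t (pauli_op s v)}.
    apply: constructive_indefinite_description.
    case: (boolP (s \in S)) => hs; last by exists s.
    by have [u hu1 hu2] := hmul t s ht hs; exists u.
  pose u s := sval (hu s).
  have huS s : s \in S -> u s \in S by move=> hs; case: (svalP (hu s) hs).
  have huE s w : s \in S -> pauli_op (u s) w = pauli_op t (pauli_op s w).
    by move=> hs; case: (svalP (hu s) hs) => _ ->.
  have [t' ht' ht'E] := hinv t ht.
  have uinj : {in S &, injective u}.
    move=> s1 s2 h1 h2 e; apply: (op_inj hD) => w.
    by rewrite -(ht'E (pauli_op s1 w)) -huE // e huE // ht'E.
  have uS : u @: S = S.
    apply/eqP; rewrite eqEcard card_in_imset // leqnn andbT.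
    by apply/subsetP => _ /imsetP [s hs ->]; exact: huS.
  symmetry; rewrite -[in LHS]uS big_imset //=.
  by apply: eq_bigr => s hs; rewrite huE.
have trP : trq P = #|S|%:R * K%:R by rewrite -hK; apply: tr_proj.
have C0 : C != 0%VS by rewrite -dimv_eq0 hK -lt0n.
set v0 := vpick C.
have v0C : v0 \in C := memv_pick C.
have v00 : v0 != 0 by rewrite vpick0.
have [k0 hk0] : exists k, v0 k != 0.
  apply/existsP; apply: contraNT v00 => /existsPn H; apply/eqP/ffunP => k.
  by rewrite ffunE; apply/eqP; rewrite -[_ == _]negbK H.
have lam0 s : s \in S -> s.2.1 = 0 -> s.2.2 = 0 -> s = pauli_id D n.
  move=> hs hx hz; have := congr1 (fun f : qstate D n => f k0) (hC1 s v0 hs v0C).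
  rewrite /= op_E.
  have -> : sh k0 s.2.1 = k0 by apply/ffunP => i; rewrite ffunE hx ffunE addr0.
  have -> : cf s k0 = omega D ^+ val s.1.
    by rewrite /cf hz big1 ?mulr1 // => i _; rewrite ffunE mul0r expr0.
  rewrite -{2}[v0 k0]mul1r => /(mulIf hk0) /(om_eq1 hD) h1.
  by case: s hs hx hz h1 => l [x z] /= _ -> -> ->.
have trP2 : trq P = #|qbasis D n|%:R.
  rewrite /trq /P; under eq_bigr => k _ do rewrite sum_ffunE.
  rewrite exchange_big /= (bigD1 (pauli_id D n)) //= [X in _ + X]big1 => [|s /andP[hs hne]].
    rewrite addr0.
    have := tr_op hD (pauli_id D n); rewrite /trq => ->.
    by rewrite /= eqxx /= expr0 mul1r.
  have := tr_op hD s; rewrite /trq => ->.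
  case: (eqVneq s.2.1 0) => hx //=; case: (eqVneq s.2.2 0) => hz //=.
  by rewrite (lam0 s hs hx hz) eqxx in hne.
move: trP; rewrite trP2 card_qbasis // -natrM => /eqP; rewrite eqr_nat => /eqP e.
split; first by rewrite mulnC e. by rewrite e dvdn_mull.
Qed.
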